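(* If $\rho_1$ and $\rho_2$ are radius functions on $\mathbb{R}^d$, then $\rho_1\vee\rho_2:=\max\{\rho_1,\rho_2\}$ is a radius function.
   Context: A radius function is a Borel function $\rho:\mathbb{R}^d\to(0,\infty)$ for which there is a constant $C<\infty$ such that $C^{-1}\rho(x)\le\rho(y)\le C\rho(x)$ for all $x\in\mathbb{R}^d$ and all $y\in B(x,\rho(x))$ (Euclidean open ball). *)

(* Defs.v *)
From HB Require Import structures.
From mathcomp Require Import all_boot all_order all_algebra.
From mathcomp Require Import all_classical all_reals all_analysis.
Set Implicit Arguments. Unset Strict Implicit. Unset Printing Implicit Defensive.
Import Order.TTheory GRing.Theory Num.Theory numFieldNormedType.Exports.
Local Open Scope classical_set_scope.
Local Open Scope ring_scope.

(* R^d is modelled as row vectors 'rV[R]_d. *)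

Definition enorm (R : realType) (d : nat) (x : 'rV[R]_d) : R :=
  Num.sqrt (\sum_(i < d) x ord0 i ^+ 2).

Definition eball (R : realType) (d : nat) (x : 'rV[R]_d) (r : R) : set 'rV[R]_d :=
  [set y | enorm (y - x) < r].

(* Borel sets of R^d: the sigma-algebra generated by the open sets of the
   (product = Euclidean) topology of 'rV[R]_d. *)
Definition borel_set (R : realType) (d : nat) (A : set 'rV[R]_d) : Prop :=
  <<s [set U : set 'rV[R]_d | open U] >> A.

Definition borel_fun (R : realType) (d : nat) (f : 'rV[R]_d -> R) : Prop :=
  forall B : set R, measurable B -> borel_set (f @^-1` B).

Definition radius_function (R : realType) (d : nat) (rho : 'rV[R]_d -> R) : Prop :=
  borel_fun rho /\ (forall x, 0 < rho x) /\
  exists C : R, 0 < C /\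
    forall x y, eball x (rho x) y -> C^-1 * rho x <= rho y /\ rho y <= C * rho x.

(* Main.v *)
Require Import Defs.
From HB Require Import structures.
From mathcomp Require Import all_boot all_order all_algebra.
From mathcomp Require Import all_classical all_reals all_analysis.
From mathcomp Require Import measurable_realfun.
Import Order.TTheory GRing.Theory Num.Theory numFieldNormedType.Exports.
Local Open Scope ring_scope.

Lemma borel_max (R : realType) (d : nat) (f g : 'rV[R]_d -> R) :
  borel_fun f -> borel_fun g -> borel_fun (fun x => Num.max (f x) (g x)).
Proof.
move=> hf hg.
pose G := [set U : set 'rV[R]_d | open U]%classic.
have mf : forall h : 'rV[R]_d -> R, borel_fun h ->
   measurable_fun (setT : set (g_sigma_algebraType G)) h.
  by move=> h hh _ B mB; rewrite setTI; exact: hh.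
have := measurable_maxr (mf _ hf) (mf _ hg).
move=> H B mB; have := H measurableT B mB; by rewrite setTI.
Qed.

Lemma enormN (R : realType) (d : nat) (x y : 'rV[R]_d) :
  enorm (x - y) = enorm (y - x).
Proof.
rewrite /enorm; congr Num.sqrt; apply: eq_bigr => i _.
by rewrite !mxE -sqrrN opprB.
Qed.

Lemma key (R : realType) (d : nat) (C : R) (r s : 'rV[R]_d -> R) (Cr Cs : R) :
    1 <= C ->
    (forall x, 0 < r x) -> (forall x, 0 < s x) -> 0 < Cr -> 0 < Cs ->
    Cr <= C -> Cs <= C ->
    (forall x y, eball x (r x) y -> Cr^-1 * r x <= r y /\ r y <= Cr * r x) ->
    (forall x y, eball x (s x) y -> Cs^-1 * s x <= s y /\ s y <= Cs * s x) ->
    forall x y, s x <= r x -> eball x (r x) y ->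
      C^-1 * r x <= Num.max (r y) (s y) /\ Num.max (r y) (s y) <= C * r x.
Proof.
move=> C1 rp sp Crp Csp CrC CsC hr hs x y sr xy.
have Cp : 0 < C by apply: lt_le_trans C1.
have [hr1 hr2] := hr x y xy.
split.
  rewrite le_max; apply/orP; left; apply: le_trans hr1.
  apply: ler_wpM2r; first exact: ltW.
  by rewrite lef_pV2 ?posrE.
rewrite ge_max; apply/andP; split.
  apply: le_trans hr2 _; apply: ler_wpM2r => //; exact: ltW.
have rxC : r x <= C * r x by apply: ler_peMl => //; exact: ltW.
have [lt|ge] := ltP (enorm (y - x)) (s y).
  have yx : eball y (s y) x by rewrite /eball /= enormN.
  have [hs1 _] := hs y x yx.
  have hs1' : s y <= Cs * s x.
    have E : s y = Cs * (Cs^-1 * s y) by rewrite mulrA mulfV ?mul1r // lt0r_neq0.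
    rewrite E; apply: ler_wpM2l => //; exact: ltW.
  apply: (le_trans hs1'); apply: le_trans (_ : C * s x <= C * r x).
    apply: ler_wpM2r => //; exact: ltW.
  apply: ler_wpM2l => //; exact: ltW.
apply: le_trans ge _; apply: le_trans rxC; exact: ltW.
Qed.

Theorem mainTheorem7 (R : realType) (d : nat) (rho1 rho2 : 'rV[R]_d -> R) :
  radius_function rho1 -> radius_function rho2 ->
  radius_function (fun x => Num.max (rho1 x) (rho2 x)).
Proof.
move=> [b1 [p1 [C1 [C1p h1]]]] [b2 [p2 [C2 [C2p h2]]]].
split; first exact: borel_max.
split; first by move=> x; rewrite lt_max p1.
exists (Num.max 1 (Num.max C1 C2)); split; first by rewrite lt_max ltr01.
set C := Num.max 1 _.
have C1C : C1 <= C by rewrite /C !le_max lexx orbT.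
have C2C : C2 <= C by rewrite /C !le_max lexx !orbT.
have C1le : 1 <= C by rewrite /C le_max lexx.
move=> x y.
have [le|lt] := leP (rho2 x) (rho1 x).
  move=> xy.
  exact: (@key R d C rho1 rho2 C1 C2 C1le p1 p2 C1p C2p C1C C2C h1 h2 x y le xy).
move=> xy.
rewrite maxC.
exact: (@key R d C rho2 rho1 C2 C1 C1le p2 p1 C2p C1p C2C C1C h2 h1 x y (ltW lt) xy).
Qed.
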